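(* Let $G$ be a graph containing no cycle of length 6, let $x\in V(G)$, and let $A$ be a connected component of $G[N_2(x)]$ which contains an odd cycle. Then $|N(x)\cap N(V(A))|=1$.
   Context: All graphs are finite, simple and undirected; ''containing no cycle of length 6'' means having no subgraph (not necessarily induced) isomorphic to $C_6$. $N_i(S)$ denotes the set of vertices at distance exactly $i$ from the vertex set $S$, $N(S)=N_1(S)$, $N(v)=N(\{v\})$, $N_2(v)=N_2(\{v\})$. *)

(* Defs.v *)
From mathcomp Require Import all_boot.
Set Implicit Arguments. Unset Strict Implicit. Unset Printing Implicit Defensive.

Section Graph.
Variables (T : finType) (e : rel T).

Definition simple_graph : Prop := symmetric e /\ irreflexive e.

Definition has_cycle_len (k : nat) : Prop :=
  exists s : seq T, [/\ size s = k, uniq s & cycle e s].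

Definition C6_free : Prop := ~ has_cycle_len 6.

Definition N1 (v : T) : {set T} := [set y | e v y].

Definition N2 (v : T) : {set T} :=
  [set y | [&& y != v, ~~ e v y & [exists z, e v z && e z y]]].

Definition NS (S : {set T}) : {set T} :=
  [set y | (y \notin S) && [exists a in S, e a y]].

Definition induced (S : {set T}) : rel T :=
  [rel u v | [&& e u v, u \in S & v \in S]].

Definition is_component (S A : {set T}) : Prop :=
  exists2 a, a \in S & A = [set y in S | connect (induced S) a y].

Definition has_odd_cycle_in (A : {set T}) : Prop :=
  exists s : seq T,
    [/\ 3 <= size s, odd (size s), uniq s, cycle e s & all (mem A) s].

End Graph.

(* Main.v *)
Require Import Defs.
From mathcomp Require Import all_boot.
From mathcomp Require Import zify.
Set Implicit Arguments. Unset Strict Implicit. Unset Printing Implicit Defensive.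

Definition Sx (T : finType) (e : rel T) (x a : T) : {set T} := [set y | e x y && e y a].

Lemma N2P (T : finType) (e : rel T) x a : a \in N2 e x ->
  [/\ a != x, ~~ e x a & exists z, e x z && e z a].
Proof. by rewrite inE => /and3P [h1 h2 /existsP h3]. Qed.

Lemma key0 (T : finType) (e : rel T) x a b c y z :
  simple_graph e -> C6_free e ->
  induced e (N2 e x) a b -> induced e (N2 e x) b c -> a != c ->
  y \in Sx e x a -> z \in Sx e x c -> y = z.
Proof.
move=> [sym irr] c6 /and3P [eab Na Nb] /and3P [ebc _ Nc] nac.
rewrite !inE => /andP [exy eya] /andP [exz ezc].
apply/eqP; apply/negPn/negP => nyz; apply: c6.
have [ax nxa _] := N2P Na; have [bx nxb _] := N2P Nb; have [cx nxc _] := N2P Nc.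
have ab : a != b by apply/eqP => h; rewrite h irr in eab.
have bc : b != c by apply/eqP => h; rewrite h irr in ebc.
have xy : x != y by apply/eqP => h; rewrite h irr in exy.
have xz : x != z by apply/eqP => h; rewrite h irr in exz.
have ya : y != a by apply/eqP => h; rewrite -h exy in nxa.
have yb : y != b by apply/eqP => h; rewrite -h exy in nxb.
have yc : y != c by apply/eqP => h; rewrite -h exy in nxc.
have za : z != a by apply/eqP => h; rewrite -h exz in nxa.
have zb : z != b by apply/eqP => h; rewrite -h exz in nxb.
have zc : z != c by apply/eqP => h; rewrite -h exz in nxc.
exists [:: x; y; a; b; c; z]; split => //.
  rewrite /= !inE !negb_or xy eq_sym ax eq_sym bx eq_sym cx xz ya yb yc nyz.
  by rewrite ab nac eq_sym za bc eq_sym zb eq_sym zc.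
by rewrite /= exy eya eab ebc (sym c z) ezc (sym z x) exz.
Qed.

Lemma Sx_nonempty (T : finType) (e : rel T) x c :
  c \in N2 e x -> exists z, z \in Sx e x c.
Proof. by move=> /N2P [_ _ [z hz]]; exists z; rewrite inE. Qed.

Lemma key (T : finType) (e : rel T) x a b c :
  simple_graph e -> C6_free e ->
  induced e (N2 e x) a b -> induced e (N2 e x) b c -> Sx e x a = Sx e x c.
Proof.
move=> sg c6 hab hbc; have [/eqP -> // | nac] := boolP (a == c).
have /and3P [_ Na _] := hab; have /and3P [_ _ Nc] := hbc.
have [z0 hz0] := Sx_nonempty Nc; have [y0 hy0] := Sx_nonempty Na.
apply/setP => y; apply/idP/idP => hy.
  by rewrite (key0 sg c6 hab hbc nac hy hz0).
by rewrite -(key0 sg c6 hab hbc nac hy0 hy).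
Qed.

Lemma cyc_edge (T : finType) (e : rel T) (s : seq T) x0 i :
  cycle e s -> uniq s -> 0 < size s ->
  e (nth x0 s (i %% size s)) (nth x0 s (i.+1 %% size s)).
Proof.
move=> cs us ns.
have ki : i %% size s < size s by rewrite ltn_mod.
have := next_cycle cs (mem_nth x0 ki).
rewrite next_nth mem_nth // index_uniq //.
case: s cs us ns ki => [//|y p] cs us ns ki /=.
have -> : i.+1 %% (size p).+1 = (i %% (size p).+1).+1 %% (size p).+1.
  by rewrite -[i.+1]addn1 -modnDml addn1.
simpl in ki.
have [lt|ge] := ltnP (i %% (size p).+1).+1 (size p).+1.
  rewrite (modn_small lt) /=.
  by rewrite (set_nth_default x0) //.
have eq : (i %% (size p).+1).+1 = (size p).+1 by apply/eqP; rewrite eqn_leq ge ki.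
rewrite eq modnn /=; have eqk : i %% (size p).+1 = size p by case: eq.
by rewrite eqk [nth y p _]nth_default.
Qed.

Theorem lemma2p3 (T : finType) (e : rel T) (x : T) (A : {set T}) :
  simple_graph e -> C6_free e ->
  is_component e (N2 e x) A -> has_odd_cycle_in e A ->
  #|N1 e x :&: NS e A| = 1.
Proof.
move=> sg c6 [a0 Na0 defA] [s [n3 odds us cs allA]].
have [sym irr] := sg.
set n := size s in n3 odds.
have n0 : 0 < n by apply: leq_trans n3.
set f := fun i => nth a0 s (i %% n).
have inA : forall i, f i \in A.
  by move=> i; apply: (allP allA); apply: mem_nth; rewrite ltn_mod.
have AN2 : forall v, v \in A -> v \in N2 e x.
  by move=> v; rewrite defA inE => /andP [].
have Acon : forall v, v \in A -> connect (induced e (N2 e x)) a0 v.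
  by move=> v; rewrite defA inE => /andP [].
have ed : forall i, induced e (N2 e x) (f i) (f i.+1).
  by move=> i; apply/and3P; split; [apply: cyc_edge | apply: AN2 | apply: AN2].
have HS : forall i, Sx e x (f i) = Sx e x (f i.+2).
  by move=> i; apply: (key sg c6 (ed i) (ed i.+1)).
have H2j : forall j, Sx e x (f 0) = Sx e x (f (2 * j)).
  elim=> [|j IH]; first by rewrite muln0.
  by rewrite IH HS; congr (Sx e x (f _)); lia.
have Hall : forall i, Sx e x (f i) = Sx e x (f 0).
  move=> i; rewrite (H2j (i * (n./2).+1)).
  have hn : n = (n./2).*2 + 1 by have := odd_double_half n; rewrite odds /=; lia.
  have -> : f (2 * (i * (n./2).+1)) = f i.
    rewrite /f; congr (nth _ _ _).
    have -> : 2 * (i * (n./2).+1) = i * n + i by rewrite {2}hn; nia.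
    by rewrite modnMDl.
  by [].
set Y := Sx e x (f 0).
have isym : symmetric (induced e (N2 e x)).
  by move=> u v; rewrite /induced /= sym; case: (u \in _); case: (v \in _); rewrite ?andbF.
have P0 : forall b, induced e (N2 e x) (f 0) b -> Sx e x b = Y.
  move=> b hb; rewrite isym in hb.
  by rewrite (key sg c6 hb (ed 0)) Hall.
have prop : forall p a, Sx e x a = Y ->
    (forall b, induced e (N2 e x) a b -> Sx e x b = Y) ->
    path (induced e (N2 e x)) a p -> Sx e x (last a p) = Y.
  elim=> [|b p IH] a Ha Hn //= /andP [hab hp].
  apply: IH hp; first exact: Hn.
  move=> c hc; rewrite isym in hab; rewrite isym in hc.
  by rewrite (key sg c6 hc hab) Ha.
have allY : forall v, v \in A -> Sx e x v = Y.
  move=> v vA.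
  have : connect (induced e (N2 e x)) (f 0) v.
    apply: connect_trans (Acon v vA).
    by rewrite (sym_connect_sym isym); apply: Acon.
  move=> /connectP [p hp ->].
  by apply: prop hp.
have [z0 hz0] := Sx_nonempty (AN2 _ (inA 2)).
have f02 : f 0 != f 2.
  by rewrite /f (modn_small n0) (modn_small n3) nth_uniq.
have YE : Y = [set z0].
  apply/setP => y; rewrite inE; apply/idP/idP.
    by move=> hy; apply/eqP; apply: (key0 sg c6 (ed 0) (ed 1) f02 hy hz0).
  by move=> /eqP ->; rewrite /Y -(Hall 2).
have -> : N1 e x :&: NS e A = Y.
  apply/setP => y; rewrite !inE; apply/idP/idP.
    move=> /and3P [exy _ /existsP [a /andP [aA eay]]].
    have := allY a aA; move/setP => /(_ y); rewrite /Y !inE exy sym eay => <-; by [].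
  move=> /andP [exy eyf].
  rewrite exy /=; apply/andP; split.
    by apply/negP => /AN2 /N2P [_ h _]; rewrite exy in h.
  by apply/existsP; exists (f 0); rewrite inA sym.
by rewrite YE cards1.
Qed.
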